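(* Let $(X,\phi)$ be a flow on a compact metric space $(X,d)$. Then for every $\tau>0$, $$\frac1\tau\overline{\mathrm{mdim}}_M(\phi_\tau,X,d)\le\overline{\mathrm{mdim}}_M(\phi,X,d),\qquad \frac1\tau\underline{\mathrm{mdim}}_M(\phi_\tau,X,d)\le\underline{\mathrm{mdim}}_M(\phi,X,d).$$ If moreover $(X,\phi)$ is a uniformly Lipschitz flow, then both inequalities are equalities.
   Context: A flow: $\phi:X\times\mathbb{R}\to X$ continuous, $\phi_t(x)=\phi(x,t)$, $\phi_0=\mathrm{id}$, $\phi_{t+s}=\phi_t\circ\phi_s$. Uniformly Lipschitz: for every $t_0>0$ there is $L(t_0)>0$ such that for all $\epsilon>0$ and $x,y\in X$, $d(x,y)\le\epsilon/L(t_0)$ implies $d(\phi_sx,\phi_sy)<\epsilon$ for all $s\in[0,t_0]$. Flow metric mean dimension: $d_t(x,y)=\max_{s\in[0,t]}d(\phi_sx,\phi_sy)$; $r_t(\phi,X,d,\epsilon)$ is the minimal cardinality of $E\subset X$ with every $x\in X$ $d_t$-within $\epsilon$ (strictly) of $E$; $r(\phi,X,d,\epsilon)=\limsup_{t\to\infty}\frac1t\log r_t(\phi,X,d,\epsilon)$; $\overline{\mathrm{mdim}}_M(\phi,X,d)=\limsup_{\epsilon\to0}\frac{r(\phi,X,d,\epsilon)}{\log(1/\epsilon)}$, $\underline{\mathrm{mdim}}_M$ with $\liminf$. For the homeomorphism $\phi_\tau$: $d_{n,\phi_\tau}(x,y)=\max_{0\le j\le n-1}d(\phi_{\tau j}x,\phi_{\tau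 j}y)$; $r_n(\phi_\tau,X,d,\epsilon)$ is the minimal cardinality of $E\subset X$ with every $x\in X$ satisfying $d_{n,\phi_\tau}(x,y)<\epsilon$ for some $y\in E$; $r(\phi_\tau,X,d,\epsilon)=\limsup_{n\to\infty}\frac1n\log r_n(\phi_\tau,X,d,\epsilon)$; $\overline{\mathrm{mdim}}_M(\phi_\tau,X,d)=\limsup_{\epsilon\to0}\frac{r(\phi_\tau,X,d,\epsilon)}{\log(1/\epsilon)}$, $\underline{\mathrm{mdim}}_M(\phi_\tau,X,d)$ with $\liminf$. *)

(* Defs.v *)
From Stdlib Require List.
From HB Require Import structures.
From mathcomp Require Import all_boot all_order all_algebra.
From mathcomp Require Import all_classical all_reals all_analysis.
Set Implicit Arguments. Unset Strict Implicit. Unset Printing Implicit Defensive.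
Import Order.TTheory GRing.Theory Num.Theory.
Local Open Scope classical_set_scope.
Local Open Scope ring_scope.

Section Defs.
Context {R : realType} {X : Type}.
Implicit Types (d : X -> X -> R) (phi : X -> R -> X).

Definition is_metric d :=
  [/\ forall x y, 0 <= d x y,
      forall x y, d x y = 0 <-> x = y,
      forall x y, d x y = d y x &
      forall x y z, d x z <= d x y + d y z].

Definition dopen d (U : set X) :=
  forall x, U x -> exists2 r : R, 0 < r & forall y, d x y < r -> U y.

Definition dcompact d :=
  forall (I : Type) (U : I -> set X), (forall i, dopen d (U i)) ->
    (forall x, exists i, U i x) ->
    exists s : seq I, forall x, exists i, List.In i s /\ U i x.

(* phi x t = phi_t(x) : a flow *)
Definition is_flow phi :=
  (forall x, phi x 0 = x) /\ (forall x t s, phi x (t + s) = phi (phi x s) t).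

Definition flow_continuous d phi :=
  forall x t (e : R), 0 < e -> exists2 del : R, 0 < del &
    forall y s, d x y < del -> `|t - s| < del -> d (phi x t) (phi y s) < e.

Definition unif_lipschitz d phi :=
  forall t0 : R, 0 < t0 -> exists2 L : R, 0 < L &
    forall (e : R) x y, 0 < e -> d x y <= e / L ->
      forall s, 0 <= s <= t0 -> d (phi x s) (phi y s) < e.

Definition limsup_pinfty (g : R -> \bar R) : \bar R :=
  ereal_inf [set ereal_sup [set g t | t in [set t | T <= t]] | T in [set: R]].
Definition liminf_pinfty (g : R -> \bar R) : \bar R :=
  ereal_sup [set ereal_inf [set g t | t in [set t | T <= t]] | T in [set: R]].
Definition limsup_nat (g : nat -> \bar R) : \bar R :=
  ereal_inf [set ereal_sup [set g n | n in [set n | (N <= n)%N]] | N in [set: nat]].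
Definition limsup_0p (g : R -> \bar R) : \bar R :=
  ereal_inf [set ereal_sup [set g e | e in [set e | 0 < e < del]]
            | del in [set del | 0 < del]].
Definition liminf_0p (g : R -> \bar R) : \bar R :=
  ereal_sup [set ereal_inf [set g e | e in [set e | 0 < e < del]]
            | del in [set del | 0 < del]].

Definition elogdiv (r : \bar R) (t : R) : \bar R :=
  match r with
  | r'%:E => (ln r' / t)%:E
  | +oo%E => +oo%E
  | -oo%E => -oo%E
  end.

(* d_t(x,y) = max_{s in [0,t]} d(phi_s x, phi_s y)  (written as a sup; it is attained) *)
Definition flow_dist d phi (t : R) x y : R :=
  sup [set d (phi x s) (phi y s) | s in [set s | 0 <= s <= t]].

Definition flow_spanning d phi (t e : R) (E : seq X) :=
  forall x, exists y, List.In y E /\ flow_dist d phi t x y < e.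

Definition rt_flow d phi (t e : R) : \bar R :=
  ereal_inf [set ((size E)%:R)%:E | E in flow_spanning d phi t e].

Definition r_flow d phi (e : R) : \bar R :=
  limsup_pinfty (fun t => elogdiv (rt_flow d phi t e) t).

Definition umdim_flow d phi : \bar R :=
  limsup_0p (fun e => (r_flow d phi e * ((ln (1 / e))^-1)%:E)%E).
Definition lmdim_flow d phi : \bar R :=
  liminf_0p (fun e => (r_flow d phi e * ((ln (1 / e))^-1)%:E)%E).

Definition hom_dist d phi (tau : R) (n : nat) x y : R :=
  \big[Num.max/0]_(j < n) d (phi x (tau * j%:R)) (phi y (tau * j%:R)).

Definition hom_spanning d phi tau n (e : R) (E : seq X) :=
  forall x, exists y, List.In y E /\ hom_dist d phi tau n x y < e.

Definition rn_hom d phi tau n (e : R) : \bar R :=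
  ereal_inf [set ((size E)%:R)%:E | E in hom_spanning d phi tau n e].

Definition r_hom d phi tau (e : R) : \bar R :=
  limsup_nat (fun n => elogdiv (rn_hom d phi tau n e) n%:R).

Definition umdim_hom d phi tau : \bar R :=
  limsup_0p (fun e => (r_hom d phi tau e * ((ln (1 / e))^-1)%:E)%E).
Definition lmdim_hom d phi tau : \bar R :=
  liminf_0p (fun e => (r_hom d phi tau e * ((ln (1 / e))^-1)%:E)%E).

End Defs.

(* Main.v *)
Require Import Defs.
From mathcomp Require Import all_boot all_order all_algebra.
From mathcomp Require Import all_classical all_reals all_analysis.
From mathcomp Require Import ring lra.
Import Order.TTheory GRing.Theory Num.Theory.

Module Helpers.
Local Open Scope classical_set_scope.
Local Open Scope ring_scope.

Section Gen.
Context {R : realType}.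
Local Open Scope ereal_scope.

Lemma sup_img_Z (T : Type) (A : set T) (f : T -> \bar R) (k : R) : (0 < k)%R ->
  ereal_sup [set k%:E * f x | x in A] = k%:E * ereal_sup [set f x | x in A].
Proof. by move=> k0; rewrite -ereal_sup_pZl // image_comp. Qed.

Lemma inf_img_Z (T : Type) (A : set T) (f : T -> \bar R) (k : R) : (0 < k)%R ->
  ereal_inf [set k%:E * f x | x in A] = k%:E * ereal_inf [set f x | x in A].
Proof. by move=> k0; rewrite -ereal_inf_pZl // image_comp. Qed.

Lemma inf_sup_Z (I J : Type) (P : set I) (S : I -> set J) (g : J -> \bar R) (k : R) :
  (0 < k)%R ->
  ereal_inf [set ereal_sup [set k%:E * g t | t in S i] | i in P] =
  k%:E * ereal_inf [set ereal_sup [set g t | t in S i] | i in P].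
Proof.
move=> k0; under eq_imagel => i _ do rewrite sup_img_Z //.
by rewrite inf_img_Z.
Qed.

Lemma sup_inf_Z (I J : Type) (P : set I) (S : I -> set J) (g : J -> \bar R) (k : R) :
  (0 < k)%R ->
  ereal_sup [set ereal_inf [set k%:E * g t | t in S i] | i in P] =
  k%:E * ereal_sup [set ereal_inf [set g t | t in S i] | i in P].
Proof.
move=> k0; under eq_imagel => i _ do rewrite inf_img_Z //.
by rewrite sup_img_Z.
Qed.

Lemma limsup_0p_Z (g : R -> \bar R) k : (0 < k)%R ->
  limsup_0p (fun e => k%:E * g e) = k%:E * limsup_0p g.
Proof. by move=> k0; rewrite /limsup_0p inf_sup_Z. Qed.
Lemma liminf_0p_Z (g : R -> \bar R) k : (0 < k)%R ->
  liminf_0p (fun e => k%:E * g e) = k%:E * liminf_0p g.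
Proof. by move=> k0; rewrite /liminf_0p sup_inf_Z. Qed.
Lemma limsup_nat_Z (g : nat -> \bar R) k : (0 < k)%R ->
  limsup_nat (fun e => k%:E * g e) = k%:E * limsup_nat g.
Proof. by move=> k0; rewrite /limsup_nat inf_sup_Z. Qed.

Lemma limsup_0p_mono (g h : R -> \bar R) (d0 : R) : (0 < d0)%R ->
  (forall e, (0 < e < d0)%R -> g e <= h e) -> limsup_0p g <= limsup_0p h.
Proof.
move=> d00 gh; apply: le_ereal_inf_tmp => _ [del /= del0 <-].
apply: (@le_trans _ _ (ereal_sup [set g e | e in [set e | (0 < e < Num.min del d0)%R]])).
  by apply: ereal_inf_lbound; exists (Num.min del d0) => //=; rewrite lt_min del0.
apply: ge_ereal_sup => _ [e /= /andP[e0 +] <-]; rewrite lt_min => /andP[ed ed0].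
apply: (le_trans (gh e _)); first by rewrite e0.
by apply: ereal_sup_ubound; exists e => //=; rewrite e0.
Qed.

Lemma liminf_0p_mono (g h : R -> \bar R) (d0 : R) : (0 < d0)%R ->
  (forall e, (0 < e < d0)%R -> g e <= h e) -> liminf_0p g <= liminf_0p h.
Proof.
move=> d00 gh; apply: ge_ereal_sup => _ [del /= del0 <-].
apply: (@le_trans _ _ (ereal_inf [set h e | e in [set e | (0 < e < Num.min del d0)%R]])).
  apply: le_ereal_inf_tmp => _ [e /= /andP[e0 +] <-]; rewrite lt_min => /andP[ed ed0].
  apply: (le_trans _ (gh e _)); last by rewrite e0.
  by apply: ereal_inf_lbound; exists e => //=; rewrite e0.
by apply: ereal_sup_ubound; exists (Num.min del d0) => //=; rewrite lt_min del0.
Qed.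

Lemma limsup_0p_div (K : R -> \bar R) (c : R) : (1 <= c)%R ->
  limsup_0p (fun e => K (e / c)%R) <= limsup_0p K.
Proof.
move=> c1; apply: le_ereal_inf_tmp => _ [del /= del0 <-].
apply: le_trans (ereal_inf_lbound _) _; first by exists del.
apply: ge_ereal_sup => _ [e /= /andP[e0 ed] <-].
apply: ereal_sup_ubound; exists (e / c)%R => //=.
have c0 : (0 < c)%R by apply: lt_le_trans c1.
rewrite divr_gt0 //= (le_lt_trans _ ed) //.
by rewrite ler_pdivrMr // ler_peMr // ltW.
Qed.

Lemma liminf_0p_div (K : R -> \bar R) (c : R) : (1 <= c)%R ->
  liminf_0p (fun e => K (e / c)%R) <= liminf_0p K.
Proof.
move=> c1; have c0 : (0 < c)%R by apply: lt_le_trans c1.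
apply: ge_ereal_sup => _ [del /= del0 <-].
apply: (@le_trans _ _ (ereal_inf [set K e | e in [set e | (0 < e < del / c)%R]])).
  apply: le_ereal_inf_tmp => _ [e /= /andP[e0 ed] <-].
  have -> : K e = K ((e * c) / c)%R by rewrite mulfK // gt_eqF.
  apply: ereal_inf_lbound; exists (e * c)%R => //=.
  by rewrite mulr_gt0 //= -ltr_pdivlMr.
by apply: ereal_sup_ubound; exists (del / c)%R => //=; rewrite divr_gt0.
Qed.

Lemma eta_le (x y : \bar R) : 0 <= y ->
  (forall eta : R, (0 < eta)%R -> x <= (1 + eta)%:E * ((1 + eta)%:E * y)) -> x <= y.
Proof.
case: y => [r||] // r0 H; last by rewrite leey.
case: x H => [a||] H; last by rewrite leNye.
- rewrite lee_fin in r0; rewrite lee_fin; rewrite leNgt; apply/negP => ra.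
  pose eta := (Num.min 1 ((a - r) / (3 * (r + 1))))%R.
  have eta0 : (0 < eta)%R by rewrite lt_min ltr01 divr_gt0 //; lra.
  have := H eta eta0; rewrite -!EFinM lee_fin.
  have e1 : (eta <= 1)%R by rewrite ge_min lexx.
  have e2 : (eta <= (a - r) / (3 * (r + 1)))%R by rewrite ge_min lexx orbT.
  rewrite ler_pdivlMr in e2; last lra.
  move=> h; nra.
- by have := H 1%R ltr01; rewrite -!EFinM leNgt ltey.
Qed.

Lemma inf_sup_ge0 (I J : Type) (P : set I) (S : I -> set J) (g : J -> \bar R) :
  (forall i, P i -> exists2 t, S i t & 0 <= g t) ->
  0 <= ereal_inf [set ereal_sup [set g t | t in S i] | i in P].
Proof.
move=> H; apply: le_ereal_inf_tmp => _ [i Pi <-].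
have [t St gt] := H i Pi; apply: le_trans gt _.
by apply: ereal_sup_ubound; exists t.
Qed.

Lemma sup_inf_ge0 (I J : Type) (P : set I) (S : I -> set J) (g : J -> \bar R) i :
  P i -> (forall t, S i t -> 0 <= g t) ->
  0 <= ereal_sup [set ereal_inf [set g t | t in S i] | i in P].
Proof.
move=> Pi H; apply: le_trans (ereal_sup_ubound _); last by exists i.
by apply: le_ereal_inf_tmp => _ [t St <-]; apply: H.
Qed.


Lemma w_bound (c eta e : R) : (1 <= c)%R -> (0 < eta)%R ->
  (0 < e < Num.min 1 (expR (- ln c / eta)))%R ->
  ((ln (1 / e))^-1 <= (1 + eta) * (ln (1 / (e / c)))^-1)%R.
Proof.
move=> c1 eta0 /andP[e0]; rewrite lt_min => /andP[e1 eexp].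
have c0 : (0 < c)%R by apply: lt_le_trans c1.
have lc0 : (0 <= ln c)%R by apply: ln_ge0.
have Le : ln (1 / e) = (- ln e)%R by rewrite div1r lnV // posrE.
have Lc : ln (1 / (e / c)) = (ln c + ln (1 / e))%R.
  rewrite -lnM ?posrE ?divr_gt0 //; congr ln; field; rewrite ?gt_eqF //.
have lne : (ln e < - ln c / eta)%R.
  by rewrite -ltr_expR lnK ?posrE.
rewrite Lc Le; set L := (- ln e)%R.
have etaL : (ln c < eta * L)%R.
  rewrite /L; move: lne; rewrite ltr_pdivlMr // => h; nra.
have L0 : (0 < L)%R.
  have : (0 <= ln c / eta)%R by rewrite divr_ge0 // ltW.
  rewrite /L; move: lne; lra.
rewrite -subr_ge0.
have -> : ((1 + eta) * (ln c + L)^-1 - L^-1 = ((1 + eta) * L - (ln c + L)) / ((ln c + L) * L))%R.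
  field; apply/andP; split; rewrite gt_eqF //; lra.
apply: divr_ge0; first lra.
apply: mulr_ge0; lra.
Qed.

Lemma limsup_rescale (G : R -> \bar R) (c eta : R) : (1 <= c)%R -> (0 < eta)%R ->
  (forall e, (0 < e)%R -> 0 <= G e) ->
  limsup_0p (fun e => G (e / c)%R * ((ln (1 / e))^-1)%:E) <=
  (1 + eta)%:E * limsup_0p (fun e => G e * ((ln (1 / e))^-1)%:E).
Proof.
move=> c1 eta0 G0; have c0 : (0 < c)%R by apply: lt_le_trans c1.
apply: (@le_trans _ _ (limsup_0p (fun e => (1 + eta)%:E *
   (G (e / c)%R * ((ln (1 / (e / c)))^-1)%:E)))).
  apply: (@limsup_0p_mono _ _ (Num.min 1 (expR (- ln c / eta)))%R).
    by rewrite lt_min ltr01 expR_gt0.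
  move=> e he; rewrite muleCA; apply: lee_wpmul2l.
    by apply: G0; case/andP: he => e0 _; rewrite divr_gt0.
  by rewrite -EFinM lee_fin; apply: w_bound.
rewrite limsup_0p_Z; last lra.
apply: lee_wpmul2l; first by rewrite lee_fin; lra.
exact: (limsup_0p_div (fun e => G e * ((ln (1 / e))^-1)%:E)).
Qed.

Lemma liminf_rescale (G : R -> \bar R) (c eta : R) : (1 <= c)%R -> (0 < eta)%R ->
  (forall e, (0 < e)%R -> 0 <= G e) ->
  liminf_0p (fun e => G (e / c)%R * ((ln (1 / e))^-1)%:E) <=
  (1 + eta)%:E * liminf_0p (fun e => G e * ((ln (1 / e))^-1)%:E).
Proof.
move=> c1 eta0 G0; have c0 : (0 < c)%R by apply: lt_le_trans c1.
apply: (@le_trans _ _ (liminf_0p (fun e => (1 + eta)%:E *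
   (G (e / c)%R * ((ln (1 / (e / c)))^-1)%:E)))).
  apply: (@liminf_0p_mono _ _ (Num.min 1 (expR (- ln c / eta)))%R).
    by rewrite lt_min ltr01 expR_gt0.
  move=> e he; rewrite muleCA; apply: lee_wpmul2l.
    by apply: G0; case/andP: he => e0 _; rewrite divr_gt0.
  by rewrite -EFinM lee_fin; apply: w_bound.
rewrite liminf_0p_Z; last lra.
apply: lee_wpmul2l; first by rewrite lee_fin; lra.
exact: (liminf_0p_div (fun e => G e * ((ln (1 / e))^-1)%:E)).
Qed.

End Gen.
Local Open Scope classical_set_scope.
Local Open Scope ring_scope.

Section Elog.
Context {R : realType}.
Local Open Scope ereal_scope.
Definition good (x : \bar R) := x = 0 \/ 1 <= x.

Lemma elog_ge0 x (t : R) : good x -> (0 <= t)%R -> 0 <= elogdiv x t.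
Proof.
case=> [->|]; first by rewrite /= ln0 // mul0r.
case: x => [r| |] h t0 /=.
- rewrite lee_fin in h; rewrite lee_fin.
  by rewrite divr_ge0 // ln_ge0.
- by rewrite leey.
- by [].
Qed.

Lemma elog_mono x y (t : R) : good x -> good y -> x <= y -> (0 < t)%R ->
  elogdiv x t <= elogdiv y t.
Proof.
move=> [->|x1] gy xy t0; first by rewrite /= ln0 // mul0r; apply: elog_ge0 => //; apply: ltW.
case: x x1 xy => [a| |] a1 xy; last by [].
- case: y gy xy => [b| |] gy xy; last by [].
  + rewrite lee_fin in xy; rewrite lee_fin in a1; rewrite /= lee_fin.
    move: xy => ab.
    apply: ler_wpM2r; first by rewrite invr_ge0 ltW.
    have a0 : (0 < a)%R by apply: lt_le_trans ltr01 a1.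
    by rewrite ler_ln ?posrE // (lt_le_trans a0 ab).
  + by rewrite /= leey.
- by move: xy; rewrite leye_eq => /eqP ->.
Qed.

Lemma elog_t x (t t' : R) : good x -> (0 < t' <= t)%R -> elogdiv x t <= elogdiv x t'.
Proof.
case=> [->|]; first by rewrite /= ln0 // !mul0r.
case: x => [a| |] a1 /andP[t'0 tt'] /=; last by [].
- rewrite lee_fin in a1; rewrite lee_fin.
  apply: ler_wpM2l; first by rewrite ln_ge0.
  by rewrite lef_pV2 // posrE; apply: lt_le_trans tt'.
- by [].
Qed.

Lemma elog_Z x (t k : R) : good x -> (0 < k)%R -> (0 < t)%R ->
  k%:E * elogdiv x t = elogdiv x (t / k).
Proof.
case=> [->|]; first by rewrite /= ln0 // !mul0r mule0.
case: x => [a| |] a1 k0 t0 /=.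
- by rewrite -EFinM; congr EFin; field; rewrite ?gt_eqF.
- by rewrite muleC gt0_mulye // lte_fin.
- by [].
Qed.
End Elog.

Section Flow.
Context {R : realType} {X : Type} (d : X -> X -> R) (phi : X -> R -> X).

Lemma good_inf (Sp : seq X -> Prop) :
  (forall E, Sp E -> forall x : X, exists y, List.In y E) -> ((X -> False) -> Sp [::]) ->
  @good R (ereal_inf [set ((size E)%:R)%:E | E in Sp]).
Proof.
move=> H1 H2; case: (pselect (exists x : X, True)) => [[x0 _]|nX].
  right; apply: le_ereal_inf_tmp => _ [E SE <-].
  have [y Hy] := H1 E SE x0.
  by case: E SE Hy => //= a E' _ _; rewrite lee_fin ler1n.
left; have S0 : Sp [::] by apply: H2 => x; apply: nX; exists x.
apply/le_anti/andP; split.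
  by apply: ereal_inf_lbound; exists [::].
by apply: le_ereal_inf_tmp => _ [E _ <-]; rewrite lee_fin ler0n.
Qed.

Lemma good_rn tau n e : good (rn_hom d phi tau n e).
Proof.
apply: good_inf => [E HE x|nX].
  by have [y [Iy _]] := HE x; exists y.
by move=> x; case: (nX x).
Qed.

Lemma good_rt t e : good (rt_flow d phi t e).
Proof.
apply: good_inf => [E HE x|nX].
  by have [y [Iy _]] := HE x; exists y.
by move=> x; case: (nX x).
Qed.

Lemma In_le_sum (I : Type) (s : seq I) (f : I -> R) a :
  (forall b, 0 <= f b) -> List.In a s -> f a <= \sum_(b <- s) f b.
Proof.
move=> f0; elim: s => //= b s IH [->|/IH h].
  by rewrite big_cons lerDl sumr_ge0.
by rewrite big_cons (le_trans h) // lerDr.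
Qed.

Lemma d_bounded : is_metric d -> dcompact d -> exists B, forall x y, d x y <= B.
Proof.
move=> [d0 d00 dsym dtri] hc.
case: (pselect (exists x : X, True)) => [[x0 _]|nX]; last first.
  by exists 0 => x; case: nX; exists x.
have H1 : forall a, dopen d (fun y => d a y < 1).
  move=> a y hy; exists (1 - d a y) => [|z hz]; first by rewrite subr_gt0.
  by apply: le_lt_trans (dtri a y z) _; rewrite -ltrBrDl.
have H2 : forall x, exists a, d a x < 1.
  by move=> x; exists x; rewrite /= (proj2 (d00 x x) erefl) ltr01.
have [s Hs] := hc X (fun a y => d a y < 1) H1 H2.
exists (2 * (\sum_(a <- s) d x0 a + 1)) => y z.
have bd : forall w, d x0 w <= \sum_(a <- s) d x0 a + 1.
  move=> w; have [a [Ia Ha]] := Hs w.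
  have := @In_le_sum X s (d x0) a (d0 x0) Ia.
  have := dtri x0 a w; rewrite /= in Ha; lra.
have := dtri y x0 z; have := dsym y x0; have := bd y; have := bd z; lra.
Qed.

Variable tau : R.
Hypothesis tau0 : 0 < tau.

Section A.
Hypothesis hm : is_metric d.
Variable B : R.
Hypothesis hB : forall x y, d x y <= B.

Lemma flow_ub t x y s : 0 <= s <= t -> d (phi x s) (phi y s) <= flow_dist d phi t x y.
Proof.
move=> hs; rewrite /flow_dist; apply: sup_upper_bound; last by exists s.
split; first by exists (d (phi x s) (phi y s)); exists s.
by exists B => _ [s' _ <-].
Qed.

Lemma hom_le_flow n x y :
  hom_dist d phi tau n.+1 x y <= flow_dist d phi (tau * n%:R) x y.
Proof.
have tn : 0 <= tau * n%:R by rewrite mulr_ge0 // ltW.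
rewrite /hom_dist; apply: bigmax_le.
  apply: le_trans (flow_ub (tau * n%:R) x y 0 _); first by case: hm.
  by rewrite lexx.
move=> i _; apply: flow_ub; apply/andP; split; first by rewrite mulr_ge0 // ltW.
by apply: ler_wpM2l; [exact: ltW | rewrite ler_nat -ltnS].
Qed.

Lemma rn_le_rt n e :
  (rn_hom d phi tau n.+1 e <= rt_flow d phi (tau * n%:R) e)%E.
Proof.
apply: ereal_inf_le_tmp => _ [E HE <-]; exists E => // x.
have [y [Iy Hy]] := HE x; exists y; split => //.
exact: le_lt_trans (hom_le_flow _ _ _) Hy.
Qed.

Lemma A_ineq e : ((tau^-1)%:E * r_hom d phi tau e <= r_flow d phi e)%E.
Proof.
rewrite /r_hom -limsup_nat_Z ?invr_gt0 //.
rewrite /limsup_nat /r_flow /limsup_pinfty.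
apply: le_ereal_inf_tmp => _ [T _ <-].
set N := (Num.truncn (`|T| / tau)).+2.
apply: le_trans (ereal_inf_lbound _) _; first by exists N.
apply: ge_ereal_sup => _ [n /= Nn <-].
case: n Nn => [//|m] Nm.
have /andP[h1 h2] : ((Num.truncn (`|T| / tau))%:R <= `|T| / tau < (Num.truncn (`|T| / tau)).+1%:R)%R.
  by apply: truncn_itv; rewrite divr_ge0 // ltW.
have hm1 : ((Num.truncn (`|T| / tau)).+1%:R <= m%:R :> R)%R by rewrite ler_nat.
have m0 : (0 < m%:R :> R)%R.
  by apply: lt_le_trans hm1; rewrite ltr0n.
apply: (le_trans _ (ereal_sup_ubound _)); last first.
  exists (tau * m%:R)%R => //=.
  have : (`|T| < tau * m%:R)%R.
    by rewrite mulrC -ltr_pdivrMr //; apply: lt_le_trans hm1.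
  by move=> h; apply: ltW; exact: le_lt_trans (ler_norm T) h.
rewrite (elog_Z _ _ _ (good_rn _ _ _)) ?invr_gt0 ?ltr0n //.
apply: (@le_trans _ _ (elogdiv (rn_hom d phi tau m.+1 e) (tau * m%:R))).
  apply: elog_t; first exact: good_rn.
  apply/andP; split; first by rewrite mulr_gt0.
  rewrite invrK [X in _ <= X]mulrC; apply: ler_wpM2l; [exact: ltW | by rewrite ler_nat].
apply: elog_mono; [exact: good_rn|exact: good_rt|exact: rn_le_rt|].
by rewrite mulr_gt0.
Qed.
End A.

Section B.
Hypothesis hfl : is_flow phi.
Variable L : R.
Hypothesis L0 : 0 < L.
Hypothesis hL : forall (e : R) x y, 0 < e -> d x y <= e / L ->
      forall s, 0 <= s <= tau -> d (phi x s) (phi y s) < e.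

Definition cc := 2 * Num.max L 1.

Lemma cc1 : 1 <= cc.
Proof. rewrite /cc; have := le_max L 1; have : 1 <= Num.max L 1 by rewrite le_max lexx orbT. lra. Qed.

Lemma hom_to_flow n t e x y : 0 < e -> 0 <= t <= tau * n%:R ->
  hom_dist d phi tau n.+1 x y < e / cc -> flow_dist d phi t x y < e.
Proof.
move=> e0 /andP[t0 tn] hd.
have M1 : 1 <= Num.max L 1 by rewrite le_max lexx orbT.
have ML : L <= Num.max L 1 by rewrite le_max lexx.
apply: (@le_lt_trans _ _ (e / 2)); last lra.
rewrite /flow_dist; apply: ge_sup.
  by exists (d (phi x 0) (phi y 0)); exists 0 => //=; rewrite lexx.
move=> _ [s /andP[s0 st] <-].
set j := Num.truncn (s / tau).
have /andP[hj1 hj2] : (j%:R <= s / tau < j.+1%:R)%R.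
  by apply: truncn_itv; rewrite divr_ge0 // ltW.
have jn : (j < n.+1)%N.
  rewrite ltnS -(ler_nat R); apply: le_trans hj1 _.
  by rewrite ler_pdivrMr // mulrC (le_trans st).
have htj : tau * j%:R <= s by rewrite mulrC -ler_pdivlMr.
have hts : s < tau * j.+1%:R by rewrite mulrC -ltr_pdivrMr.
have -> : phi x s = phi (phi x (tau * j%:R)) (s - tau * j%:R).
  by rewrite -(proj2 hfl) subrK.
have -> : phi y s = phi (phi y (tau * j%:R)) (s - tau * j%:R).
  by rewrite -(proj2 hfl) subrK.
apply: ltW; apply: hL; first lra.
  have hle : d (phi x (tau * j%:R)) (phi y (tau * j%:R)) <= hom_dist d phi tau n.+1 x y.
    rewrite /hom_dist.
    exact: (@le_bigmax _ _ _ 0 (fun i : 'I_n.+1 => d (phi x (tau * i%:R)) (phi y (tau * i%:R))) (Ordinal jn)).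
  apply: (le_trans hle); apply: ltW; apply: (lt_le_trans hd).
  rewrite /cc invfM mulrA; apply: ler_wpM2l; first lra.
  by rewrite lef_pV2 // posrE; lra.
rewrite subr_ge0 htj /=; move: hts; rewrite -natr1 mulrDr mulr1; lra.
Qed.

Lemma rt_le_rn n t e : 0 < e -> 0 <= t <= tau * n%:R ->
  (rt_flow d phi t e <= rn_hom d phi tau n.+1 (e / cc))%E.
Proof.
move=> e0 ht; apply: ereal_inf_le_tmp => _ [E HE <-]; exists E => // x.
have [y [Iy Hy]] := HE x; exists y; split => //.
exact: hom_to_flow Hy.
Qed.

Lemma B_ineq eta e : 0 < eta -> 0 < e ->
  (r_flow d phi e <= ((1 + eta) / tau)%:E * r_hom d phi tau (e / cc))%E.
Proof.
move=> eta0 e0; have k0 : 0 < (1 + eta) / tau by rewrite divr_gt0 //; lra.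
rewrite /r_hom -limsup_nat_Z //.
rewrite /limsup_nat /r_flow /limsup_pinfty.
apply: le_ereal_inf_tmp => _ [N _ <-].
set T := Num.max (tau * N%:R) (2 * tau / eta).
have T0 : 0 < T by rewrite lt_max; apply/orP; right; rewrite divr_gt0 // mulr_gt0.
apply: le_trans (ereal_inf_lbound _) _; first by exists T.
apply: ge_ereal_sup => _ [t /= Tt <-].
have t0 : 0 < t by apply: lt_le_trans Tt.
have tN : tau * N%:R <= t by apply: le_trans Tt; rewrite le_max lexx.
have teta : 2 * tau / eta <= t by apply: le_trans Tt; rewrite le_max lexx orbT.
set j := Num.truncn (t / tau).
have /andP[hj1 hj2] : (j%:R <= t / tau < j.+1%:R)%R.
  by apply: truncn_itv; rewrite divr_ge0 // ltW.
have htj : tau * j%:R <= t by rewrite mulrC -ler_pdivlMr.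
have hts : t < tau * j.+1%:R by rewrite mulrC -ltr_pdivrMr.
apply: (le_trans _ (ereal_sup_ubound _)); last first.
  exists j.+2 => //=.
  have : (N%:R < j.+1%:R :> R).
    apply: le_lt_trans hj2; rewrite ler_pdivlMr // mulrC //.
  by rewrite ltr_nat => /ltnW/leqW.
apply: (@le_trans _ _ (elogdiv (rn_hom d phi tau j.+2 (e / cc)) t)).
  apply: elog_mono; [exact: good_rt|exact: good_rn| |exact: t0].
  by apply: rt_le_rn => //; rewrite (ltW t0) /= ltW.
rewrite (elog_Z _ _ _ (good_rn _ _ _)) // ?ltr0n //.
apply: elog_t; first exact: good_rn.
apply/andP; split; first by rewrite divr_gt0 // ltr0n.
have -> : j.+2%:R / ((1 + eta) / tau) = j.+2%:R * tau / (1 + eta).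
  by field; apply/andP; split; rewrite gt_eqF //; lra.
rewrite ler_pdivrMr; last lra.
move: teta; rewrite ler_pdivrMr // => teta.
have : (j.+2%:R = j%:R + 2 :> R) by rewrite -[j.+2]addn2 natrD.
move=> ->; nra.
Qed.
End B.
End Flow.
End Helpers.
Import Helpers.
Local Open Scope ring_scope.
Theorem proposition2p7 (R : realType) (X : Type) (d : X -> X -> R)
    (phi : X -> R -> X) :
  is_metric d -> dcompact d -> is_flow phi -> flow_continuous d phi ->
  forall tau : R, 0 < tau ->
    ((tau^-1)%:E * umdim_hom d phi tau <= umdim_flow d phi)%E /\
    ((tau^-1)%:E * lmdim_hom d phi tau <= lmdim_flow d phi)%E /\
    (unif_lipschitz d phi ->
       ((tau^-1)%:E * umdim_hom d phi tau = umdim_flow d phi)%E /\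
       ((tau^-1)%:E * lmdim_hom d phi tau = lmdim_flow d phi)%E).
Proof.
move=> hm hc hfl _ tau tau0.
have [B hB] := @d_bounded _ _ d hm hc.
have w_gt0 : forall e : R, 0 < e < 1 -> 0 < (ln (1 / e))^-1.
  move=> e /andP[e0 e1]; rewrite invr_gt0 ln_gt0 // div1r invf_gt1 //.
have w_ge0 : forall e : R, 0 < e < 1 -> (0 <= ((ln (1 / e))^-1)%:E)%E.
  by move=> e he; rewrite lee_fin ltW // w_gt0.
have Hge0 : forall e, (0 <= r_hom d phi tau e)%E.
  move=> e; rewrite /r_hom /limsup_nat; apply: inf_sup_ge0 => N _; exists N => //=.
  by apply: elog_ge0; [exact: good_rn|exact: ler0n].
have P1 : ((tau^-1)%:E * umdim_hom d phi tau <= umdim_flow d phi)%E.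
  rewrite /umdim_hom -limsup_0p_Z ?invr_gt0 //.
  apply: (limsup_0p_mono _ _ _ ltr01) => e he; rewrite muleA.
  apply: lee_wpmul2r; first exact: w_ge0.
  exact: (@A_ineq R X d phi tau tau0 hm B hB e).
have P2 : ((tau^-1)%:E * lmdim_hom d phi tau <= lmdim_flow d phi)%E.
  rewrite /lmdim_hom -liminf_0p_Z ?invr_gt0 //.
  apply: (liminf_0p_mono _ _ _ ltr01) => e he; rewrite muleA.
  apply: lee_wpmul2r; first exact: w_ge0.
  exact: (@A_ineq R X d phi tau tau0 hm B hB e).
split => //; split => // hLip.
have [L L0 hL] := hLip tau tau0.
have U0 : (0 <= umdim_hom d phi tau)%E.
  rewrite /umdim_hom /limsup_0p; apply: inf_sup_ge0 => del del0.
  have h2 : 0 < Num.min del 1 / 2 < 1.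
    rewrite divr_gt0 ?lt_min ?del0 ?ltr01 //=.
    have : Num.min del 1 <= 1 by rewrite ge_min lexx orbT.
    lra.
  exists (Num.min del 1 / 2) => /=.
    rewrite divr_gt0 ?lt_min ?del0 ?ltr01 //=.
    have : Num.min del 1 <= del by rewrite ge_min lexx.
    have : 0 < Num.min del 1 by rewrite lt_min del0 ltr01.
    lra.
  by apply: mule_ge0; [exact: Hge0|exact: w_ge0].
have L0' : (0 <= lmdim_hom d phi tau)%E.
  rewrite /lmdim_hom /liminf_0p; apply: (@sup_inf_ge0 _ _ _ _ _ _ 1) => //= e he.
  by apply: mule_ge0; [exact: Hge0|exact: w_ge0].
split.
  apply/le_anti/andP; split => //.
  apply: eta_le; first by apply: mule_ge0 => //; rewrite lee_fin invr_ge0 ltW.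
  move=> eta eta0; have k0 : 0 < (1 + eta) / tau by rewrite divr_gt0 //; lra.
  rewrite /umdim_flow.
  apply: (@le_trans _ _ (limsup_0p (fun e => ((1 + eta) / tau)%:E *
      (r_hom d phi tau (e / cc L) * ((ln (1 / e))^-1)%:E)))%E).
    apply: (limsup_0p_mono _ _ _ ltr01) => e he; rewrite muleA.
    apply: lee_wpmul2r; first exact: w_ge0.
    by apply: (@B_ineq R X d phi tau tau0 hfl L L0 hL eta e eta0); case/andP: he.
  rewrite limsup_0p_Z //.
  apply: (@le_trans _ _ (((1 + eta) / tau)%:E * ((1 + eta)%:E * umdim_hom d phi tau)))%E.
    apply: lee_wpmul2l; first by rewrite lee_fin ltW.
    exact: (@limsup_rescale R (r_hom d phi tau) (cc L) eta (cc1 L) eta0 (fun e _ => Hge0 e)).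
  by rewrite EFinM -muleA (muleCA (tau^-1)%:E).
apply/le_anti/andP; split => //.
apply: eta_le; first by apply: mule_ge0 => //; rewrite lee_fin invr_ge0 ltW.
move=> eta eta0; have k0 : 0 < (1 + eta) / tau by rewrite divr_gt0 //; lra.
rewrite /lmdim_flow.
apply: (@le_trans _ _ (liminf_0p (fun e => ((1 + eta) / tau)%:E *
    (r_hom d phi tau (e / cc L) * ((ln (1 / e))^-1)%:E)))%E).
  apply: (liminf_0p_mono _ _ _ ltr01) => e he; rewrite muleA.
  apply: lee_wpmul2r; first exact: w_ge0.
  by apply: (@B_ineq R X d phi tau tau0 hfl L L0 hL eta e eta0); case/andP: he.
rewrite liminf_0p_Z //.
apply: (@le_trans _ _ (((1 + eta) / tau)%:E * ((1 + eta)%:E * lmdim_hom d phi tau)))%E.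
  apply: lee_wpmul2l; first by rewrite lee_fin ltW.
  exact: (@liminf_rescale R (r_hom d phi tau) (cc L) eta (cc1 L) eta0 (fun e _ => Hge0 e)).
by rewrite EFinM -muleA (muleCA (tau^-1)%:E).
Qed.
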